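(* Let $X,Y$ be distinct candidates, let $T\in SO(P)$ satisfy $T(\mathbf r_{X>Y})=\mathbf r_{X>Y}$, and let $\mathbf p\in P$. Then there exists $\mathbf q\in\mathbb R\mathbf 1$ such that $T(\mathbf p)+\mathbf q\sim_{X,Y}\mathbf p$.
   Context: Fix an integer $n\ge 2$ and a set $\mathbf C$ of $n$ candidates. Fix a composition $\lambda=(\lambda_1,\dots,\lambda_m)$ of $n$ (positive integers with $\sum_i\lambda_i=n$), write $[m]=\{1,\dots,m\}$. A ballot is a function $b:\mathbf C\to[m]$ with $|b^{-1}(i)|=\lambda_i$ for every $i$; $\mathbf C_\lambda$ denotes the set of ballots. The profile space is $P=\mathbb R^{\mathbf C_\lambda}$ with basis $\{\delta_b\}$ (indicator functions) and inner product $\mathbf p\cdot\mathbf q=\sum_b\mathbf p(b)\mathbf q(b)$; $\mathbf 1=\sum_b\delta_b$. For candidates $X,Y$: $\mathbf a_{X>Y}=\sum_{b:\,b(X)<b(Y)}\delta_b$, $\mathbf r_{X>Y}=\mathbf a_{X>Y}-\mathbf a_{Y>X}$. Two profiles are $X,Y$-equivalent, $\mathbf p\sim_{X,Y}\mathbf q$, if $(\mathbf p-\mathbf q)\cdot\mathbf a_{X>Y}=0$ and $(\mathbf p-\mathbf q)\cdot\mathbf a_{Y>X}=0$. $SO(P)$ denotes the group of linear isometries of $P$ of determinant $1$. *)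

(* Defs.v *)
From HB Require Import structures.
From mathcomp Require Import all_boot all_order all_algebra.
Set Implicit Arguments. Unset Strict Implicit. Unset Printing Implicit Defensive.
Import Order.TTheory GRing.Theory Num.Theory.
Local Open Scope ring_scope.

(* Candidates are 'I_n; the composition lambda = (lam 0, ..., lam (m-1)) of n
   is given by m and lam : 'I_m -> nat; tiers [m] are 'I_m (tier 0 = "1"). *)

Definition ballot (n m : nat) (lam : 'I_m -> nat) :=
  {b : {ffun 'I_n -> 'I_m} | [forall i, #|[pred c | b c == i]| == lam i]}.

(* Profile space P = R^{C_lambda}, in coordinates w.r.t. the basis delta_b,
   indexed through enum_rank/enum_val. *)
Definition profile (R : pzRingType) n m (lam : 'I_m -> nat) :=
  'cV[R]_#|{: ballot n lam}|.

Definition delta (R : pzRingType) n m (lam : 'I_m -> nat) (b : ballot n lam)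
  : profile R n lam := delta_mx (enum_rank b) 0.

Definition pdot (R : pzRingType) n m (lam : 'I_m -> nat) (p q : profile R n lam) : R :=
  \sum_(i < #|{: ballot n lam}|) p i 0 * q i 0.

Definition ones (R : pzRingType) n m (lam : 'I_m -> nat) : profile R n lam :=
  \sum_(b : ballot n lam) delta R b.

Definition aXY (R : pzRingType) n m (lam : 'I_m -> nat) (X Y : 'I_n)
  : profile R n lam :=
  \sum_(b : ballot n lam | (val b X < val b Y)%N) delta R b.

Definition rXY (R : pzRingType) n m (lam : 'I_m -> nat) (X Y : 'I_n)
  : profile R n lam := aXY R lam X Y - aXY R lam Y X.

Definition equivXY (R : pzRingType) n m (lam : 'I_m -> nat) (X Y : 'I_n)
  (p q : profile R n lam) : Prop :=
  pdot (p - q) (aXY R lam X Y) = 0 /\ pdot (p - q) (aXY R lam Y X) = 0.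

Definition inSO (R : comNzRingType) n m (lam : 'I_m -> nat)
  (T : 'M[R]_#|{: ballot n lam}|) : Prop :=
  (forall p q : profile R n lam, pdot (T *m p) (T *m q) = pdot p q) /\ \det T = 1.

(* Main.v *)
Require Import Defs.
From HB Require Import structures.
From mathcomp Require Import all_boot all_order all_algebra all_fingroup.
From mathcomp Require Import ring.
Import Order.TTheory GRing.Theory Num.Theory.
Local Open Scope ring_scope.

Lemma card_pred_inj (T : finType) (f : T -> T) (Q : pred T) :
  injective f -> #|[pred c | Q (f c)]| = #|[pred c | Q c]|.
Proof.
move=> fi.
have := card_preimset [set c | Q c] fi.
have e1 : #|f @^-1: [set c | Q c]| = #|[pred c | Q (f c)]|.
  by apply: eq_card => x; rewrite !inE.
have e2 : #|[set c | Q c]| = #|[pred c | Q c]|.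
  by apply: eq_card => x; rewrite !inE.
by rewrite e1 e2.
Qed.

Section S.
Variables (n m : nat) (lam : 'I_m -> nat) (X Y : 'I_n).

Lemma bswap_ok (b : ballot n lam) :
  [forall i, #|[pred c | [ffun c => val b (tperm X Y c)] c == i]| == lam i].
Proof.
apply/forallP => i.
rewrite (@eq_card _ _ [pred c | val b (tperm X Y c) == i]); last first.
  by move=> c; rewrite !inE ffunE.
rewrite (@card_pred_inj _ _ (fun c => val b c == i) (@perm_inj _ (tperm X Y))).
exact: (forallP (valP b) i).
Qed.

Definition bswap (b : ballot n lam) : ballot n lam := @exist _ (fun f : {ffun 'I_n -> 'I_m} => [forall i, #|[pred c | f c == i]| == lam i]) _ (bswap_ok b).

Lemma bswapK : involutive bswap.
Proof.
move=> b; apply: val_inj; apply/ffunP => c; rewrite /= !ffunE.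
by rewrite tpermK.
Qed.

Lemma bswapX b : val (bswap b) X = val b Y.
Proof. by rewrite /= ffunE tpermL. Qed.
Lemma bswapY b : val (bswap b) Y = val b X.
Proof. by rewrite /= ffunE tpermR. Qed.
End S.

Section T.
Variables (R : comNzRingType) (n m : nat) (lam : 'I_m -> nat).
Local Notation P := (profile R n lam).

Lemma pdotBl (p q r : P) : pdot (p - q) r = pdot p r - pdot q r.
Proof. rewrite /pdot -sumrB; apply: eq_bigr => i _; rewrite !mxE; ring. Qed.
Lemma pdotDl (p q r : P) : pdot (p + q) r = pdot p r + pdot q r.
Proof. rewrite /pdot -big_split; apply: eq_bigr => i _; rewrite !mxE /=; ring. Qed.
Lemma pdotBr (p q r : P) : pdot r (p - q) = pdot r p - pdot r q.
Proof. rewrite /pdot -sumrB; apply: eq_bigr => i _; rewrite !mxE; ring. Qed.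
Lemma pdotZl c (p r : P) : pdot (c *: p) r = c * pdot p r.
Proof. rewrite /pdot mulr_sumr; apply: eq_bigr => i _; rewrite !mxE; ring. Qed.

Lemma enum_rank_eq (T : finType) (b : T) i : (enum_rank b == i) = (b == enum_val i).
Proof. by apply/eqP/eqP => [<-|->]; rewrite ?enum_rankK ?enum_valK. Qed.

Lemma sum_delta_entry (Q : pred (ballot n lam)) i :
  (\sum_(b | Q b) delta R b) i 0 = (Q (enum_val i))%:R.
Proof.
rewrite summxE.
under eq_bigr => b _ do rewrite /delta mxE eqxx andbT eq_sym enum_rank_eq.
rewrite (big_mkcond Q) (bigD1 (enum_val i)) //= eqxx big1 ?addr0.
  by case: (Q _).
by move=> b /negbTE ->; case: (Q b).
Qed.

Lemma pdot_ones (Q : pred (ballot n lam)) :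
  pdot (ones R n lam) (\sum_(b | Q b) delta R b) = \sum_(b : ballot n lam) (Q b)%:R.
Proof.
rewrite /pdot /ones.
under eq_bigr => i _ do rewrite !sum_delta_entry /= mul1r.
by rewrite (big_enum_val (fun b => (Q b)%:R)).
Qed.
End T.

Lemma sum_bool_card (R : realFieldType) (T : finType) (Q : pred T) :
  \sum_(b : T) ((Q b)%:R : R) = #|Q|%:R.
Proof.
rewrite (eq_bigr (fun b => if Q b then 1 else 0)); last by move=> b _; case: (Q b).
by rewrite -big_mkcond /= sumr_const.
Qed.

Theorem mainTheorem6 (R : realFieldType) (n m : nat) (lam : 'I_m -> nat)
  (hn : (2 <= n)%N) (hpos : forall i, (0 < lam i)%N)
  (hsum : (\sum_(i < m) lam i)%N = n)
  (X Y : 'I_n) (hXY : X != Y)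
  (T : 'M[R]_#|{: ballot n lam}|) (hT : inSO T)
  (hTr : T *m rXY R lam X Y = rXY R lam X Y)
  (p : profile R n lam) :
  exists c : R, equivXY X Y (T *m p + c *: ones R n lam) p.
Proof.
set a := aXY R lam X Y; set a' := aXY R lam Y X.
set v := T *m p - p.
have hd : pdot v a = pdot v a'.
  apply/eqP; rewrite -subr_eq0 -pdotBr -/(rXY R lam X Y) /v pdotBl.
  by rewrite -{1}hTr hT.1 subrr.
set Q := fun b : ballot n lam => (val b X < val b Y)%N.
set Q' := fun b : ballot n lam => (val b Y < val b X)%N.
have hk : pdot (ones R n lam) a = #|Q|%:R by rewrite /a /aXY pdot_ones sum_bool_card.
have hk' : pdot (ones R n lam) a' = #|Q|%:R.
  rewrite /a' /aXY pdot_ones sum_bool_card; congr (_%:R).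
  rewrite -(card_image (inv_inj (@bswapK n m lam X Y))).
  apply: eq_card => b.
  apply/imageP/idP => [[b' hb' ->]|hb].
    by move: hb'; rewrite !unfold_in /= bswapX bswapY.
  exists (@bswap n m lam X Y b); last by rewrite bswapK.
  by move: hb; rewrite !unfold_in /= bswapX bswapY.
have e : forall c, T *m p + c *: ones R n lam - p = v + c *: ones R n lam.
  by move=> c; rewrite /v addrAC.
have hv0 : #|Q| = 0%N -> pdot v a = 0.
  move=> /card0_eq h0; rewrite /a /aXY big_pred0 // .
  by rewrite /pdot big1 // => i _; rewrite !mxE mulr0.
exists (- (pdot v a / #|Q|%:R)); split.
  rewrite e pdotDl pdotZl hk.
  have [h0|h0] := eqVneq #|Q| 0%N; first by rewrite hv0 // mul0r oppr0 mul0r addr0.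
  by rewrite mulNr divfK ?subrr // pnatr_eq0.
rewrite e pdotDl pdotZl hk' -hd.
have [h0|h0] := eqVneq #|Q| 0%N; first by rewrite hv0 // mul0r oppr0 mul0r addr0.
by rewrite mulNr divfK ?subrr // pnatr_eq0.
Qed.
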